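(* Let $G$ and $H$ be finite nilpotent groups each of which has at least two non-abelian Sylow subgroups. If $\Gamma_G\cong\Gamma_H$, then $|G|=|H|$.
   Context: For a non-abelian group $G$ with center $Z(G)$, the non-commuting graph $\Gamma_G$ is the simple graph with vertex set $G\setminus Z(G)$ in which two distinct vertices $x,y$ are adjacent if and only if $xy\neq yx$. *)

(* Defs.v *)
From mathcomp Require Import all_boot all_order all_fingroup all_solvable.
Set Implicit Arguments. Unset Strict Implicit. Unset Printing Implicit Defensive.
Local Open Scope group_scope.

Definition nc_vertices (gT : finGroupType) (G : {group gT}) : {set gT} :=
  G :\: 'Z(G).

Definition nc_adj (gT : finGroupType) (G : {group gT}) (x y : gT) : bool :=
  [&& x \in nc_vertices G, y \in nc_vertices G, x != y & x * y != y * x].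

Definition nc_graph_iso (gT hT : finGroupType) (G : {group gT}) (H : {group hT}) : Prop :=
  exists f : gT -> hT,
    [/\ {in nc_vertices G &, injective f},
        f @: nc_vertices G = nc_vertices H &
        {in nc_vertices G &, forall x y, nc_adj H (f x) (f y) = nc_adj G x y}].

Definition two_nonabelian_sylows (gT : finGroupType) (G : {group gT}) : Prop :=
  exists p q : nat, exists P Q : {group gT},
    [/\ [&& prime p, prime q & p != q], P \in 'Syl_p(G), Q \in 'Syl_q(G), ~~ abelian P & ~~ abelian Q].

(* Main.v *)
Require Import Defs.
From mathcomp Require Import all_boot all_order all_fingroup all_solvable.
From mathcomp Require Import zify.
Set Implicit Arguments. Unset Strict Implicit. Unset Printing Implicit Defensive.

Lemma ar_aux (a b c n a' b' c' n' z z' : nat) :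
  a + z' = a' + z -> b + z' = b' + z -> c + z' = c' + z -> n + z' = n' + z ->
  a * b = n * c -> a < n -> b < n -> a' * b' <= n' * c' -> z <= z'.
Proof.
move=> ha hb hc hn e la lb le.
have h1 : a + b < n + c.
  have : 0 < (n - a) * (n - b) by rewrite muln_gt0 !subn_gt0 la lb.
  nia.
rewrite leqNgt; apply/negP => lt.
set k := z - z'.
have ea : a = a' + k by lia.
have eb : b = b' + k by lia.
have ec : c = c' + k by lia.
have en : n = n' + k by lia.
have kp : 0 < k by lia.
rewrite ea eb ec en in e h1.
nia.
Qed.

Local Open Scope group_scope.

Definition NN (gT : finGroupType) (G : {group gT}) (S : {set gT}) :=
  [set v in nc_vertices G | [forall s in S, ~~ nc_adj G s v]].

Lemma adjE (gT : finGroupType) (G : {group gT}) s v :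
  s \in nc_vertices G -> v \in nc_vertices G -> ~~ nc_adj G s v = (s * v == v * s).
Proof.
move=> Vs Vv; rewrite /nc_adj Vs Vv /= negb_and negbK.
by case: (eqVneq s v) => [->|_]; rewrite ?eqxx ?negbK.
Qed.

Lemma Zsub (gT : finGroupType) (G : {group gT}) (S : {set gT}) :
  S \subset G -> 'Z(G) \subset 'C_G(S).
Proof.
move=> sSG; apply/subsetP=> z /centerP [Gz cz]; apply/subcentP; split=> //.
by move=> s Ss; apply: cz; exact: (subsetP sSG s Ss).
Qed.

Lemma NN_eq (gT : finGroupType) (G : {group gT}) (S : {set gT}) :
  S \subset nc_vertices G -> NN G S = 'C_G(S) :\: 'Z(G).
Proof.
move=> sSV; apply/setP=> v; rewrite [in RHS]inE [in LHS]inE.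
case Vv: (v \in nc_vertices G) => /=.
  move: (Vv); rewrite /nc_vertices inE => /andP[-> Gv] /=.
  apply/forall_inP/subcentP.
    move=> H; split=> // s Ss; have := H s Ss.
    by rewrite adjE // ?(subsetP sSV) // => /eqP e; apply: esym.
  case=> _ cvS s Ss; rewrite adjE ?(subsetP sSV s Ss) //.
  by rewrite (cvS s Ss).
apply/esym/negbTE; apply: contraFN Vv => /andP[nZ /setIP[Gv _]].
by rewrite /nc_vertices inE nZ Gv.
Qed.

Lemma card_NN (gT : finGroupType) (G : {group gT}) (S : {set gT}) :
  S \subset nc_vertices G -> #|NN G S| + #|'Z(G)| = #|'C_G(S)|.
Proof.
move=> sSV; have sSG : S \subset G by apply: subset_trans sSV (subsetDl _ _).
by rewrite NN_eq // -(cardsID 'Z(G) 'C_G(S)) (setIidPr (Zsub sSG)) addnC.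
Qed.

Lemma card_V (gT : finGroupType) (G : {group gT}) :
  #|nc_vertices G| + #|'Z(G)| = #|G|.
Proof.
by rewrite /nc_vertices -(cardsID 'Z(G) G) (setIidPr (center_sub G)) addnC.
Qed.

Lemma NN_iso (gT hT : finGroupType) (G : {group gT}) (H : {group hT}) (f : gT -> hT)
  (S : {set gT}) :
  f @: nc_vertices G = nc_vertices H ->
  {in nc_vertices G &, forall x y, nc_adj H (f x) (f y) = nc_adj G x y} ->
  S \subset nc_vertices G -> f @: NN G S = NN H (f @: S).
Proof.
move=> img adjf sSV; apply/setP=> w; apply/imsetP/idP.
  case=> v; rewrite inE => /andP[Vv Hv] ->; rewrite inE.
  have -> : f v \in nc_vertices H by rewrite -img; apply: imset_f.
  apply/forall_inP => t /imsetP[s Ss ->]; rewrite adjf ?(subsetP sSV s Ss) //.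
  exact: (forall_inP Hv s Ss).
rewrite /NN inE => /andP[Vw Hw].
have : w \in f @: nc_vertices G by rewrite img.
case/imsetP=> v Vv ew; subst w; exists v => //.
rewrite inE Vv /=; apply/forall_inP=> s Ss.
rewrite -adjf ?(subsetP sSV s Ss) //; apply: (forall_inP Hw); exact: imset_f.
Qed.

Lemma card_C_iso (gT hT : finGroupType) (G : {group gT}) (H : {group hT}) (f : gT -> hT)
  (S : {set gT}) :
  {in nc_vertices G &, injective f} ->
  f @: nc_vertices G = nc_vertices H ->
  {in nc_vertices G &, forall x y, nc_adj H (f x) (f y) = nc_adj G x y} ->
  S \subset nc_vertices G ->
  #|'C_G(S)| + #|'Z(H)| = #|'C_H(f @: S)| + #|'Z(G)|.
Proof.
move=> inj img adjf sSV.
have sTV : f @: S \subset nc_vertices H by rewrite -img; apply: imsetS.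
rewrite -(card_NN sSV) -(card_NN sTV) -(NN_iso img adjf sSV).
have sNV : NN G S \subset nc_vertices G by apply/subsetP=> v; rewrite inE => /andP[].
rewrite (card_in_imset (sub_in2 (subsetP sNV) inj)).
by rewrite -!addnA [#|'Z(H)| + _]addnC.
Qed.

Lemma CU (gT : finGroupType) (L : {group gT}) (T1 T2 : {set gT}) :
  'C_L(T1 :|: T2) = 'C_L(T1) :&: 'C_L(T2).
Proof. by rewrite centU; apply/setP=> u; rewrite !inE; case: (u \in L). Qed.

Lemma Cbound (gT : finGroupType) (L : {group gT}) (T1 T2 : {set gT}) :
  #|'C_L(T1)| * #|'C_L(T2)| <= #|L| * #|'C_L(T1 :|: T2)|.
Proof.
have -> : 'C_L(T1 :|: T2) = 'C_L(T1) :&: 'C_L(T2) by rewrite centU; apply/setP=> u; rewrite !inE; case: (u \in L).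
rewrite mul_cardG leq_mul2r; apply/orP; right; apply: subset_leq_card.
by rewrite mul_subG // subsetIl.
Qed.

Lemma good_pair (gT : finGroupType) (G : {group gT}) :
  nilpotent G -> two_nonabelian_sylows G ->
  exists x y, [/\ x \in nc_vertices G, y \in nc_vertices G &
                 'C_G([set x]) * 'C_G([set y]) = G].
Proof.
move=> nilG [p [q [P [Q [/and3P[pp pq npq] sylP sylQ nabP nabQ]]]]].
rewrite inE in sylP; rewrite inE in sylQ.
have hall := nilpotent_pcore_Hall p nilG.
have hall' := nilpotent_pcore_Hall p^' nilG.
have sPG := pHall_sub sylP; have sQG := pHall_sub sylQ.
have sPO : P \subset 'O_p(G) by rewrite (sub_Hall_pcore hall sPG) (pHall_pgroup sylP).
have sQO : Q \subset 'O_p^'(G).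
  rewrite (sub_Hall_pcore hall' sQG); apply: pi_pgroup (pHall_pgroup sylQ) _.
  by rewrite !inE eq_sym.
have := nilpotent_pcoreC p nilG; rewrite dprodC; case/dprodP => _ defG cOO' _.
have cO'O : 'O_p^'(G) \subset 'C('O_p(G)) by rewrite centsC.
have pick_x (K : {group gT}) : ~~ abelian K -> K \subset G ->
    exists2 x, x \in K & x \in nc_vertices G.
  move=> nabK sKG; case/subsetPn: nabK => x Kx nCx; exists x => //.
  rewrite /nc_vertices inE (subsetP sKG x Kx) andbT.
  apply: contra nCx => /centerP[_ cx]; apply/centP => u Ku; apply: cx.
  exact: (subsetP sKG u Ku).
have [x Px Vx] := pick_x P nabP sPG.
have [y Qy Vy] := pick_x Q nabQ sQG.
exists x, y; split=> //; apply/eqP; rewrite eqEsubset mul_subG ?subsetIl //=.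
rewrite -{1}defG; apply: mulgSS; rewrite subsetI pcore_sub /= centsC sub1set.
  exact: (subsetP cOO' x (subsetP sPO x Px)).
exact: (subsetP cO'O y (subsetP sQO y Qy)).
Qed.

Lemma half (gT hT : finGroupType) (G : {group gT}) (H : {group hT}) (f : gT -> hT)
  (S1 S2 : {set gT}) :
  {in nc_vertices G &, injective f} ->
  f @: nc_vertices G = nc_vertices H ->
  {in nc_vertices G &, forall x y, nc_adj H (f x) (f y) = nc_adj G x y} ->
  S1 \subset nc_vertices G -> S2 \subset nc_vertices G ->
  ((#|'C_G(S1)| * #|'C_G(S2)| = #|G| * #|'C_G(S1 :|: S2)|)%N ->
     #|'C_G(S1)| < #|G| -> #|'C_G(S2)| < #|G| -> #|'Z(G)| <= #|'Z(H)|) /\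
  ((#|'C_H(f @: S1)| * #|'C_H(f @: S2)| = #|H| * #|'C_H(f @: S1 :|: f @: S2)|)%N ->
     #|'C_H(f @: S1)| < #|H| -> #|'C_H(f @: S2)| < #|H| -> #|'Z(H)| <= #|'Z(G)|).
Proof.
move=> inj img adjf s1 s2.
have e1 := card_C_iso inj img adjf s1.
have e2 := card_C_iso inj img adjf s2.
have s12 : S1 :|: S2 \subset nc_vertices G by rewrite subUset s1 s2.
have e12 := card_C_iso inj img adjf s12; rewrite imsetU in e12.
have eV : (#|G| + #|'Z(H)| = #|H| + #|'Z(G)|)%N.
  rewrite -card_V -(card_V H) -img (card_in_imset inj); lia.
have b1 := Cbound G S1 S2.
have b2 := Cbound H (f @: S1) (f @: S2).
split=> e l1 l2.
  by apply: (ar_aux _ _ _ _ e l1 l2 b2); lia.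
by apply: (ar_aux _ _ _ _ e l1 l2 b1); lia.
Qed.

Lemma proper_C (gT : finGroupType) (G : {group gT}) x :
  x \in nc_vertices G -> #|'C_G([set x])| < #|G|.
Proof.
move=> Vx; apply: proper_card; rewrite properEneq subsetIl andbT.
have Gx : x \in G by move: Vx; rewrite /nc_vertices inE => /andP[].
apply/negP => /eqP e; move: Vx; rewrite /nc_vertices inE Gx andbT. move/negP; apply; apply/centerP.
split=> // u Gu.
have : u \in 'C_G([set x]) by rewrite e.
by case/subcentP => _ cu; apply/esym/cu; rewrite inE.
Qed.

Theorem corollary2p5 (gT hT : finGroupType) (G : {group gT}) (H : {group hT}) :
  nilpotent G -> nilpotent H ->
  two_nonabelian_sylows G -> two_nonabelian_sylows H ->
  nc_graph_iso G H ->
  #|G| = #|H|.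
Proof.
move=> nilG nilH twG twH [f [inj img adjf]].
have eV : (#|G| + #|'Z(H)| = #|H| + #|'Z(G)|)%N.
  rewrite -card_V -(card_V H) -img (card_in_imset inj); lia.
have [x [y [Vx Vy defG]]] := good_pair nilG twG.
have [x' [y' [Vx' Vy' defH]]] := good_pair nilH twH.
have le1 : #|'Z(G)| <= #|'Z(H)|.
  have sx : [set x] \subset nc_vertices G by rewrite sub1set.
  have sy : [set y] \subset nc_vertices G by rewrite sub1set.
  case: (half inj img adjf sx sy) => h _; apply: h; last 2 first.
  - exact: proper_C.
  - exact: proper_C.
  by rewrite CU mul_cardG defG.
have le2 : #|'Z(H)| <= #|'Z(G)|.
  pose S1 := nc_vertices G :&: f @^-1: [set x'].
  pose S2 := nc_vertices G :&: f @^-1: [set y'].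
  have preim (t : hT) : t \in nc_vertices H ->
      f @: (nc_vertices G :&: f @^-1: [set t]) = [set t].
    move=> Vt; apply/setP=> w; rewrite inE; apply/imsetP/eqP.
      by case=> v; rewrite !inE => /andP[_ /eqP <-] ->.
    move=> ->; have : t \in f @: nc_vertices G by rewrite img.
    by case/imsetP=> v Vv ->; exists v; rewrite // in_setI Vv /= !inE.
  have s1 : S1 \subset nc_vertices G by apply: subsetIl.
  have s2 : S2 \subset nc_vertices G by apply: subsetIl.
  case: (half inj img adjf s1 s2) => _ h; apply: h; rewrite ?preim //.
  - by rewrite CU mul_cardG defH.
  - exact: proper_C.
  - exact: proper_C.
have : #|'Z(G)| = #|'Z(H)| by apply/eqP; rewrite eqn_leq le1 le2.
lia.
Qed.
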